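(* For all integers $n \ge 0$ and $k \ge 0$, the word $W_n$ occurs exactly $3^k$ times as a (contiguous) subword of $W_{n+k}$. Equivalently, writing $W_{n+k}$ as the concatenation of $3^k$ copies of $W_n$ with a single letter $1$ inserted between some consecutive copies (as results from iterating $W_{m+1}=W_mW_m1W_m$), the only occurrences of $W_n$ in $W_{n+k}$ are these $3^k$ copies.
   Context: Words are finite strings over the alphabet $\{0,1\}$. Define $W_0 = 0$ and $W_{m+1} = W_m W_m 1 W_m$ (concatenation) for $m\ge 0$. An occurrence of a word $u$ in a word $v$ is a position at which $u$ appears as a contiguous block of $v$. *)

(* Defs.v *)
(* Words over {0,1} are encoded as seq bool: 0 = false, 1 = true. *)
From mathcomp Require Import all_boot.
Set Implicit Arguments. Unset Strict Implicit. Unset Printing Implicit Defensive.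

Fixpoint W (m : nat) : seq bool :=
  match m with
  | 0 => [:: false]
  | m'.+1 => W m' ++ W m' ++ [:: true] ++ W m'
  end.

Definition occurs_at (u v : seq bool) (i : nat) : bool :=
  (i + size u <= size v) && (take (size u) (drop i v) == u).

Definition num_occ (u v : seq bool) : nat :=
  count (occurs_at u v) (iota 0 (size v).+1).

(* Main.v *)
Require Import Defs.
From mathcomp Require Import all_boot.
From mathcomp Require Import zify.

Fixpoint sig (n : nat) (w : seq bool) : seq bool :=
  match w with
  | [::] => [::]
  | b :: w' => (if b then [:: true] else W n) ++ sig n w'
  end.

Lemma W_cons n : exists r, W n = false :: r.
Proof.
elim: n => [|n [r IH]]; first by exists [::].
by exists (r ++ W n ++ true :: W n); rewrite /= IH.
Qed.

Lemma sig_cat n u v : sig n (u ++ v) = sig n u ++ sig n v.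
Proof. by elim: u => [|b u IH] //=; rewrite IH catA. Qed.

Lemma sig1 n w : sig n.+1 w = sig n (sig 1 w).
Proof.
elim: w => [|b w IH] //=; rewrite IH; case: b => //=.
by rewrite -!catA.
Qed.

Lemma WnK n k : W (n + k) = sig n (W k).
Proof.
elim: k => [|k IH]; first by rewrite addn0 /= cats0.
by rewrite addnS /= IH !sig_cat /=.
Qed.

Lemma cntW k : count (fun b : bool => ~~ b) (W k) = 3 ^ k.
Proof.
elim: k => [|k IH] //=; rewrite !count_cat /= IH expnS; lia.
Qed.

Lemma occ_pre u v i : i <= size v -> occurs_at u v i = prefix u (drop i v).
Proof.
move=> Hi; rewrite prefixE /occurs_at; case: eqP => H; last by rewrite andbF.
rewrite andbT; have := congr1 size H; rewrite size_take_min size_drop => /minn_idPl; rewrite leq_subRL // addnC.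
Qed.

Definition f (u v : seq bool) :=
  count (fun i => prefix u (drop i v)) (iota 0 (size v).+1).

Lemma f_cons u a v : f u (a :: v) = prefix u (a :: v) + f u v.
Proof.
rewrite /f.
have -> : iota 0 (size (a :: v)).+1 = 0 :: iota (1 + 0) (size v).+1 by [].
by rewrite iotaDl /= count_map.
Qed.

Lemma f_cat u x y : f u (x ++ y) =
  count (fun i => prefix u (drop i (x ++ y))) (iota 0 (size x)) + f u y.
Proof.
elim: x => [|a x IH] //.
rewrite cat_cons f_cons IH.
have -> : iota 0 (size (a :: x)) = 0 :: iota (1 + 0) (size x) by [].
rewrite iotaDl [count _ (_ :: _)]/= count_map addnA; by case: u {IH}.
Qed.

Lemma dropL (s1 s2 : seq bool) i : i < size s1 -> drop i (s1 ++ s2) = drop i s1 ++ s2.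
Proof. by move=> H; rewrite drop_cat H. Qed.

Lemma dropR (s1 s2 : seq bool) i : size s1 <= i -> drop i (s1 ++ s2) = drop (i - size s1) s2.
Proof. by move=> H; rewrite drop_cat ltnNge H. Qed.

Lemma P n u v : prefix (sig n u) (sig n v) -> prefix u v.
Proof.
have [r Hr] := W_cons n.
elim: u v => [|a u IH] [|b v] //=.
- by case: a => //=; rewrite Hr.
- case: a; case: b => //=; rewrite ?Hr //.
  + move=> H; apply: IH. by move: H.
  + rewrite -Hr prefix_catr //= => /andP [_]; exact: IH.
Qed.

Lemma C n : forall i t, 0 < i < size (W n) ->
  ~~ prefix (W n) (drop i (W n) ++ sig n t).
Proof.
elim: n => [|n IH] i t Hi; first by simpl in Hi; lia.
set Y := W n.
have {}IH : forall i t, 0 < i < size Y -> ~~ prefix Y (drop i Y ++ sig n t) := IH.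
have [r Hr] := W_cons n.
have HW : W n.+1 = Y ++ Y ++ true :: Y by [].
have HY : prefix Y (W n.+1) by rewrite HW prefix_prefix.
have HS : size (W n.+1) = (size Y + size Y + size Y).+1.
  by rewrite HW !size_cat /=; lia.
rewrite -dropL; last by lia.
have E : W n.+1 ++ sig n.+1 t = Y ++ Y ++ true :: Y ++ sig n (sig 1 t).
  by rewrite sig1 HW -!catA.
rewrite E; apply/negP => H.
have HY' := prefix_trans HY H.
case: (ltngtP i (size Y)) => H1.
- rewrite dropL // in HY'.
  have := IH i [:: false, true, false & sig 1 t] ltac:(lia).
  by rewrite /= HY'.
- rewrite dropR in HY'; last by lia.
  case: (ltngtP (i - size Y) (size Y)) => H2.
  + rewrite dropL // in HY'.
    have := IH (i - size Y) [:: true, false & sig 1 t] ltac:(lia).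
    by rewrite /= HY'.
  + rewrite dropR /= in HY'; last by lia.
    case E3: (i - size Y - size Y) => [|j]; first by lia.
    rewrite E3 /= in HY'.
    case: j E3 HY' => [|j] E3 HY'.
    * rewrite /= dropR in H; last by lia.
      rewrite dropR /= in H; last by lia.
      rewrite E3 /= in H.
      have : prefix (sig n [:: false; false; true; false]) (sig n (false :: sig 1 t)).
        rewrite /= cats0; move: H; by rewrite drop0.
      move/P; case: t {H E HY'} => [|[] t] //=.
    * rewrite dropL in HY'; last by lia.
      have := IH j.+1 (sig 1 t) ltac:(lia).
      by rewrite HY'.
  + rewrite H2 drop_size_cat // in HY'.
    by move: HY'; rewrite /Y Hr.
- subst i; rewrite drop_size_cat // in H.
  by move: H; rewrite HW prefix_catr // eqxx /= /Y Hr.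
Qed.

Lemma main n w : f (W n) (sig n w) = count (fun b : bool => ~~ b) w.
Proof.
have [r Hr] := W_cons n.
elim: w => [|b w IH]; first by rewrite /f /= Hr.
rewrite /= f_cat IH; case: b => /=.
  by rewrite Hr.
have Hs : 0 < size (W n) by rewrite Hr.
rewrite -(prednK Hs) /= drop0 prefix_prefix (iotaDl 1 0) count_map.
rewrite (eq_in_count (a2 := pred0)) ?count_pred0 //.
move=> i; rewrite mem_iota => Hi /=.
rewrite dropL; last by lia.
apply/negbTE; apply: C; lia.
Qed.

Theorem lemma1 (n k : nat) : num_occ (W n) (W (n + k)) = 3 ^ k.
Proof.
rewrite /num_occ (eq_in_count (a2 := fun i => prefix (W n) (drop i (W (n + k))))).
  by rewrite -/(f _ _) WnK main cntW.
by move=> i; rewrite mem_iota => Hi; rewrite occ_pre //; lia.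
Qed.
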